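(* Let $A\subset B$ be prime Goldie $\mathsf{k}$-algebras with $LD\,A=LD\,B$. If $B$ is $LD$-stable, then so is $A$.
   Context: $\mathsf{k}$ is a field of characteristic zero. $GK$ is Gelfand–Kirillov dimension: $GK\,R=\sup_V\limsup_m\log(\dim V^m)/\log m$ over subframes $V$ (finite-dimensional subspaces containing $1$). Lower transcendence degree $LD$: if every subframe $V$ admits a finite-dimensional nonzero $W$ with $\dim VW=\dim W$, then $LD\,R=0$; otherwise $LD\,R=\sup_V\sup\{d>0:\exists c>0,\ \dim VW\ge\dim W+c(\dim W)^{(d-1)/d}\text{ for all finite-dimensional }W\neq0\}$. $R$ is $LD$-stable if $LD\,R=GK\,R$. *)

(* Defs.v *)
From HB Require Import structures.
From mathcomp Require Import all_boot all_order all_algebra.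
From mathcomp Require Import all_classical all_reals all_analysis.
From mathcomp Require Import Rstruct.

Set Implicit Arguments.
Unset Strict Implicit.
Unset Printing Implicit Defensive.

Import Order.TTheory GRing.Theory Num.Theory.
Local Open Scope ring_scope.
Local Open Scope classical_set_scope.

Notation RR := Rdefinitions.R.

Section Subspaces.
Variables (k : fieldType) (V : lmodType k).

(* A finite-dimensional subspace is represented by a finite spanning list. *)
Definition span (s : seq V) : set V :=
  [set v | exists c : 'I_(size s) -> k, v = \sum_(i < size s) c i *: s`_i].

Definition lin_free (t : seq V) : Prop :=
  forall c : 'I_(size t) -> k,
    \sum_(i < size t) c i *: t`_i = 0 -> forall i, c i = 0.

Definition fdim (s : seq V) : nat :=
  \max_(n < (size s).+1 |
        `[< exists t : seq V, [/\ size t = val n, lin_free t &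
                                   forall i : 'I_(size t), span s t`_i] >]) val n.
End Subspaces.

Section Algebras.
Variables (k : fieldType) (A : algType k).

(* spanning list of the product subspace VW *)
Definition spmul (s t : seq A) : seq A := [seq x * y | x <- s, y <- t].

Fixpoint spow (s : seq A) (m : nat) : seq A :=
  if m is m'.+1 then spmul (spow s m') s else [:: 1].

Definition subframe (s : seq A) : Prop := span s 1.

Definition GKdim : \bar RR :=
  ereal_sup [set limn_esup
               (fun m : nat => ((ln (fdim (spow s m))%:R / ln m%:R : RR))%:E)
            | s in [set s : seq A | subframe s]].

Definition LDdim : \bar RR :=
  if `[< forall s : seq A, subframe s ->
          exists w : seq A, (0 < fdim w)%N /\ fdim (spmul s w) = fdim w >]
  then 0%E
  else ereal_sup [set d%:E | d in
         [set d : RR | 0 < d /\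
           exists s : seq A, subframe s /\
             exists c : RR, 0 < c /\
               forall w : seq A, (0 < fdim w)%N ->
                 (fdim w)%:R + c * ((fdim w)%:R `^ ((d - 1) / d))
                   <= (fdim (spmul s w))%:R :> RR]].

Definition LD_stable : Prop := LDdim = GKdim.

(* Ring-theoretic notions; [mul] is either the multiplication (right-sided
   notions) or the opposite multiplication (left-sided notions). *)
Definition side_ideal (mul : A -> A -> A) (I : set A) : Prop :=
  [/\ I 0, (forall x y, I x -> I y -> I (x - y)) &
      forall x r, I x -> I (mul x r)].

Definition side_ann (mul : A -> A -> A) (S : set A) : set A :=
  [set x | forall s, S s -> mul s x = 0].

(* no infinite direct sum of nonzero one-sided ideals *)
Definition finite_unif_dim (mul : A -> A -> A) : Prop :=
  ~ exists I : nat -> set A,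
      [/\ forall n, side_ideal mul (I n),
          forall n, exists2 x, I n x & x != 0 &
          forall (n : nat) (x : nat -> A), (forall i, (i < n)%N -> I i (x i)) ->
             \sum_(i < n) x i = 0 -> forall i, (i < n)%N -> x i = 0].

Definition acc_ann (mul : A -> A -> A) : Prop :=
  forall S : nat -> set A,
    (forall n, side_ann mul (S n) `<=` side_ann mul (S n.+1)) ->
    exists N, forall n, (N <= n)%N -> side_ann mul (S n) = side_ann mul (S N).

Definition right_goldie : Prop :=
  finite_unif_dim *%R /\ acc_ann *%R.
Definition left_goldie : Prop :=
  finite_unif_dim (fun x y => y * x) /\ acc_ann (fun x y => y * x).
Definition goldie : Prop := left_goldie /\ right_goldie.

Definition prime_ring : Prop :=
  (1 : A) != 0 /\
  forall a b : A, (forall r : A, a * r * b = 0) -> a = 0 \/ b = 0.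

End Algebras.

(* Main.v *)
Require Import Defs.
From HB Require Import structures.
From mathcomp Require Import all_boot all_order all_algebra.
From mathcomp Require Import all_classical all_reals all_analysis.
From mathcomp Require Import Rstruct.
Import Order.TTheory GRing.Theory Num.Theory.
Local Open Scope ring_scope.
Notation Sp := Defs.span.
Section LA.
Variables (k : fieldType) (V : lmodType k).
Implicit Types (s t : seq V) (v : V).

Lemma spanP s v : Sp s v <-> exists c : nat -> k, v = \sum_(i < size s) c i *: s`_i.
Proof.
split.
  case=> c ->; exists (fun i => oapp c 0 (insub i)).
  by apply: eq_bigr => i _; rewrite valK.
by case=> c ->; exists (fun i => c (val i)).
Qed.

Lemma span0 s : Sp s 0.
Proof. by apply/spanP; exists (fun=> 0); rewrite big1 // => i _; rewrite scale0r. Qed.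

Lemma spanD s x y : Sp s x -> Sp s y -> Sp s (x + y).
Proof.
move=> [c ->] [d ->]; exists (fun i => c i + d i).
by rewrite -big_split; apply: eq_bigr => i _; rewrite scalerDl.
Qed.

Lemma spanZ s a x : Sp s x -> Sp s (a *: x).
Proof.
move=> [c ->]; exists (fun i => a * c i).
by rewrite scaler_sumr; apply: eq_bigr => i _; rewrite scalerA.
Qed.

Lemma span_sum s n (F : 'I_n -> V) : (forall i, Sp s (F i)) -> Sp s (\sum_i F i).
Proof.
move=> H; apply: (big_ind (Sp s)); [exact: span0| exact: spanD| by move=> i _].
Qed.

Lemma span_nth s i : (i < size s)%N -> Sp s s`_i.
Proof.
move=> lti; apply/spanP; exists (fun j => (j == i)%:R).
rewrite (bigD1 (Ordinal lti)) //= eqxx scale1r big1 ?addr0 //.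
move=> j /negbTE; rewrite -val_eqE /= => ->; by rewrite scale0r.
Qed.

Lemma span_mem s x : x \in s -> Sp s x.
Proof. by move=> xs; rewrite -(nth_index 0 xs); apply: span_nth; rewrite index_mem. Qed.

Lemma span_sub s t : (forall x, x \in t -> Sp s x) -> forall v, Sp t v -> Sp s v.
Proof.
move=> H v [c ->]; apply: span_sum => i; apply: spanZ; apply: H; exact: mem_nth.
Qed.

Lemma lin_freeP t : lin_free t <-> forall c : nat -> k,
  \sum_(i < size t) c i *: t`_i = 0 -> forall i, (i < size t)%N -> c i = 0.
Proof.
split.
  move=> H c Hc i lti; exact: (H (fun j => c (val j)) Hc (Ordinal lti)).
move=> H c Hc i.
have := H (fun i => oapp c 0 (insub i)) _ i (ltn_ord i); rewrite /= valK; apply.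
by rewrite -[RHS]Hc; apply: eq_bigr => j _; rewrite /= valK.
Qed.

End LA.
Section LA2.
Variables (k : fieldType) (V : lmodType k).
Implicit Types (s t : seq V) (v : V).

Lemma lin_free_size s t : lin_free t -> (forall i, (i < size t)%N -> Sp s t`_i) ->
  (size t <= size s)%N.
Proof.
move=> Hf Hs; rewrite leqNgt; apply/negP => lt.
have: forall i : 'I_(size t), exists C : 'I_(size s) -> k,
    t`_i = \sum_j C j *: s`_j by move=> i; exact: Hs i (ltn_ord i).
move=> /boolp.choice [C HC].
pose M : 'M[k]_(size t, size s) := \matrix_(i, j) C i j.
have : \rank (kermx M) != 0%N.
  rewrite mxrank_ker subn_eq0 -ltnNge; exact: leq_ltn_trans (rank_leq_col M) lt.
rewrite mxrank_eq0 => nz.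
have [i nzi] : exists i, row i (kermx M) != 0.
  apply: boolp.contrapT => H; move/negP: nz; apply; apply/eqP/row_matrixP => i.
  rewrite row0; apply/eqP; apply: boolp.contrapT => /negP Hi; apply: H; by exists i.
set u := row i (kermx M) in nzi.
have uM : u *m M = 0 by apply/sub_kermxP; exact: row_sub.
move/negP: nzi; apply; apply/eqP/rowP => j; rewrite [RHS]mxE.
move: j; apply: (Hf (fun j => u 0 j)).
transitivity (\sum_(j < size s) (u *m M) 0 j *: s`_j); last first.
  by rewrite uM big1 // => j _; rewrite mxE scale0r.
under eq_bigr => i' _ do rewrite HC scaler_sumr.
rewrite exchange_big /=; apply: eq_bigr => j _.
rewrite [(u *m M) 0 j]mxE scaler_suml; apply: eq_bigr => i1 _; by rewrite scalerA [M i1 j]mxE.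
Qed.

Lemma fdim_ge s t : lin_free t -> (forall i, (i < size t)%N -> Sp s t`_i) ->
  (size t <= fdim s)%N.
Proof.
move=> Hf Hs; have le := @lin_free_size s t Hf Hs.
rewrite /fdim; pose P := fun n : 'I_(size s).+1 => `[< exists t, [/\ size t = val n, lin_free t & forall i : 'I_(size t), Sp s t`_i] >].
have lt' : (size t < (size s).+1)%N by rewrite ltnS.
have := @leq_bigmax_cond _ P (fun n => val n) (Ordinal lt'); apply.
by rewrite /P; apply/asboolP; exists t; split => // i; apply: Hs.
Qed.

Lemma fdim_wit s : exists t, [/\ size t = fdim s, lin_free t &
   forall i, (i < size t)%N -> Sp s t`_i].
Proof.
rewrite /fdim; pose P := fun n : 'I_(size s).+1 => `[< exists t, [/\ size t = val n, lin_free t & forall i : 'I_(size t), Sp s t`_i] >].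
have : (0 < #|P|)%N.
  apply/card_gt0P; exists ord0; rewrite unfold_in; apply/asboolP; exists [::]; split => //.
  by move=> c _ []. by case.
move=> H0; have [n Pn E] := @eq_bigmax_cond _ P (fun n => val n) H0.
rewrite (_ : \max_(m < (size s).+1 | P m) val m = val n); last by rewrite -E; apply: eq_bigl => i; rewrite unfold_in.
move: Pn; rewrite unfold_in => /asboolP [t [st ft Ht]]; exists t; split => //.
by move=> i lti; apply: (Ht (Ordinal lti)).
Qed.

Lemma fdim_mono s t : (forall v, Sp t v -> Sp s v) -> (fdim t <= fdim s)%N.
Proof.
move=> H; have [w [<- fw Hw]] := fdim_wit t.
apply: fdim_ge => // i lti; apply: H; exact: Hw.
Qed.

Lemma fdim_pos s x : x != 0 -> Sp s x -> (0 < fdim s)%N.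
Proof.
move=> nz Hx; apply: (@leq_trans (size [:: x])) => //; apply: fdim_ge.
  move=> c /= ; rewrite big_ord1 => /eqP; rewrite scaler_eq0 (negbTE nz) orbF.
  by move=> /eqP c0 i; rewrite (ord1 i).
by move=> [|i] //.
Qed.

End LA2.
Section Alg.
Variables (k : fieldType) (A : algType k).
Implicit Types (a b c s : seq A).

Lemma span_mul a b x y : Sp a x -> Sp b y -> Sp (spmul a b) (x * y).
Proof.
move=> [c ->] [d ->]; rewrite mulr_suml; apply: span_sum => i.
rewrite mulr_sumr; apply: span_sum => j.
rewrite -scalerAl -scalerAr; apply: spanZ; apply: spanZ; apply: span_mem.
by apply: allpairs_f; apply: mem_nth.
Qed.

Lemma span_spmul_sub a b c : (forall x y, x \in a -> y \in b -> Sp c (x * y)) ->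
  forall v, Sp (spmul a b) v -> Sp c v.
Proof.
move=> H; apply: span_sub => z /allpairsP [[x y] [/= xa yb ->]]; exact: H.
Qed.

Lemma one_spow s m : subframe s -> Sp (spow s m) 1.
Proof.
move=> Hs; elim: m => [|m IH] /=; first by apply: span_mem; rewrite inE.
by rewrite -[1]mulr1; apply: span_mul.
Qed.

Lemma spow_shift s m v : Sp (spmul s (spow s m)) v -> Sp (spow s m.+1) v.
Proof.
suff H : forall m x y, x \in s -> y \in spow s m -> Sp (spow s m.+1) (x * y).
  by apply: span_spmul_sub => x y; apply: H.
elim=> [|n IH] x y xs.
  rewrite /= inE => /eqP ->; rewrite mulr1 -[x]mul1r; apply: span_mem.
  by apply: allpairs_f; rewrite ?inE.
move=> /allpairsP [[p z] [/= ps zs ->]]; rewrite mulrA /=.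
apply: span_mul; first exact: IH.
exact: span_mem.
Qed.

End Alg.

Section Map.
Variables (k : fieldType) (A B : algType k) (f : {lrmorphism A -> B}).

Lemma map_spmul (a b : seq A) : map f (spmul a b) = spmul (map f a) (map f b).
Proof.
elim: a => [|x a IH] //; rewrite /spmul /= map_cat; rewrite /spmul in IH; rewrite IH; congr (_ ++ _).
by rewrite -!map_comp; apply: eq_map => y /=; rewrite rmorphM.
Qed.

Lemma map_spow (s : seq A) m : map f (spow s m) = spow (map f s) m.
Proof. by elim: m => [|m IH] /=; [rewrite rmorph1 | rewrite map_spmul IH]. Qed.

Lemma span_map (s : seq A) v : Sp s v -> Sp (map f s) (f v).
Proof.
move=> /spanP [c ->]; apply/spanP; exists c; rewrite size_map raddf_sum.
apply: eq_bigr => i _; rewrite (nth_map 0) //; exact: linearZZ.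
Qed.

Lemma lin_free_map (t : seq A) : injective f -> lin_free t -> lin_free (map f t).
Proof.
move=> fi /lin_freeP H; apply/lin_freeP => c; rewrite size_map => Hc.
apply: H; apply: fi; rewrite raddf0 -[RHS]Hc raddf_sum; apply: eq_bigr => i _.
by rewrite (nth_map 0) //; exact: linearZZ.
Qed.

Lemma fdim_map_le (s : seq A) : injective f -> (fdim s <= fdim (map f s))%N.
Proof.
move=> fi; have [t [<- ft Ht]] := @fdim_wit _ _ s.
rewrite -(size_map f); apply: fdim_ge; first exact: lin_free_map.
by move=> i; rewrite size_map => lti; rewrite (nth_map 0) //; apply: span_map; apply: Ht.
Qed.

End Map.
From mathcomp Require Import ring lra.

Section Ana.
Variable R : realType.
Local Open Scope ring_scope.

Lemma pow_bound n (u : R) : 0 <= u <= 1 -> (1 + u) ^+ n <= 1 + (2 ^+ n - 1) * u.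
Proof.
move=> /andP [u0 u1]; elim: n => [|n IH]; first by rewrite !expr0 subrr mul0r addr0.
rewrite exprS [2 ^+ n.+1]exprS.
have h0 : 0 <= 1 + u by lra.
have := ler_wpM2l h0 IH.
have p1 : 1 <= 2 ^+ n :> R by rewrite exprn_ege1 // ler1n.
move: (2 ^+ n) p1 ((1 + u) ^+ n) => q q1 p H.
apply: le_trans H _.
have h1 : (q - 1) * (u * u) <= (q - 1) * u by apply: ler_wpM2l; nra.
have -> : (1 + u) * (1 + (q - 1) * u) = 1 + q * u + (q - 1) * (u * u) by ring.
have -> : 1 + (2 * q - 1) * u = 1 + q * u + (q - 1) * u by ring.
by rewrite lerD2l.
Qed.

Lemma powRK1 (x d : R) : 0 < d -> 0 <= x -> (x `^ d^-1) `^ d = x.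
Proof.
move=> d0 x0; rewrite -powRrM mulVf ?gt_eqF // powRr1 //.
Qed.

Lemma powRK2 (x d : R) : 0 < d -> 0 <= x -> (x `^ d) `^ d^-1 = x.
Proof.
move=> d0 x0; rewrite -powRrM mulfV ?gt_eqF // powRr1 //.
Qed.

Lemma growth (a : nat -> nat) (c d : R) : 0 < c -> 0 < d ->
  (forall m, (0 < a m)%N) ->
  (forall m, (a m)%:R + c * (a m)%:R `^ ((d - 1) / d) <= (a m.+1)%:R) ->
  exists2 dl, 0 < dl & forall m, (m%:R * dl) `^ d <= (a m)%:R.
Proof.
move=> c0 d0 apos arec.
set n := Num.Def.archi_bound d.
have dn : d <= n%:R by apply/ltW/archi_boundP/ltW.
have p0 : 0 < 2 ^+ n :> R by rewrite exprn_gt0.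
pose dl := Num.min 1 (c / 2 ^+ n).
have dl0 : 0 < dl by rewrite lt_min ltr01 divr_gt0.
have dl1 : dl <= 1 by rewrite ge_min lexx.
have dlc : 2 ^+ n * dl <= c.
  by rewrite mulrC -ler_pdivlMr // ge_min lexx orbT.
have key : forall x : R, 1 <= x ->
    (x `^ d^-1 + dl) `^ d <= x + c * x `^ ((d - 1) / d).
  move=> x x1.
  have x0 : 0 < x by lra.
  set b := x `^ d^-1.
  have b1 : 1 <= b.
    have : 1 `^ d^-1 <= b.
      apply: ge0_ler_powR; rewrite ?invr_ge0 ?nnegrE; lra.
    by rewrite powR1.
  have b0 : 0 < b by lra.
  set u := dl / b.
  have u0 : 0 <= u by apply: divr_ge0; lra.
  have u1 : u <= 1 by rewrite ler_pdivrMr // mul1r; lra.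
  have -> : b + dl = b * (1 + u) by rewrite mulrDr mulr1 mulrC divfK ?gt_eqF.
  rewrite powRM; [|lra|lra].
  rewrite (@powRK1 x d d0 (ltW x0)).
  have e1 : (1 + u) `^ d <= 1 + (2 ^+ n - 1) * u.
    have pb : (1 + u) ^+ n <= 1 + (2 ^+ n - 1) * u by apply: pow_bound; rewrite u0 u1.
    apply: le_trans pb.
    by rewrite -powR_mulrn; [apply: ler_powR => //; lra | lra].
  have e2 : x `^ ((d - 1) / d) = x / b.
    rewrite mulrBl divff ?gt_eqF // mul1r powRB; last by apply/implyP => _; rewrite gt_eqF.
    by rewrite (powRr1 (ltW x0)).
  rewrite e2; apply: le_trans (ler_wpM2l (ltW x0) e1) _.
  rewrite mulrDr mulr1 lerD2l /u.
  have xb : 0 <= x / b by apply: divr_ge0; lra.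
  have : (2 ^+ n - 1) * dl <= c by lra.
  move=> h; rewrite mulrA (mulrC x) -mulrA mulrCA.
  have -> : dl * ((2 ^+ n - 1) / b) * x = ((2 ^+ n - 1) * dl) * (x / b) by ring.
  nra.
have bstep : forall m, ((a m)%:R `^ d^-1 : R) + dl <= (a m.+1)%:R `^ d^-1.
  move=> m.
  have am1 : 1 <= (a m)%:R :> R by rewrite ler1n.
  have h := key _ am1.
  have nn : 0 <= (a m)%:R `^ d^-1 + dl by apply: addr_ge0; [apply: powR_ge0 | lra].
  rewrite -[X in X <= _](@powRK2 _ d d0 nn).
  apply: ge0_ler_powR; [rewrite invr_ge0; lra | by rewrite nnegrE powR_ge0 | by rewrite nnegrE ler0n | ].
  exact: le_trans h (arec m).
exists dl => // m.
have ind : m%:R * dl <= (a m)%:R `^ d^-1.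
  elim: m => [|m IH]; first by rewrite mul0r powR_ge0.
  apply: le_trans (bstep m); rewrite -addn1 natrD mulrDl mul1r lerD2r //.
rewrite -[X in _ <= X](@powRK1 _ d d0); last by apply: ler0n.
apply: ge0_ler_powR; [lra | rewrite nnegrE; apply: mulr_ge0; [exact: ler0n | lra] | by rewrite nnegrE powR_ge0 | exact: ind].
Qed.

End Ana.
Section Ana2.
Variable R : realType.
Local Open Scope ring_scope.

Lemma limsup_mono (u v : nat -> \bar R) : (forall n, (u n <= v n)%E) ->
  (limn_esup u <= limn_esup v)%E.
Proof.
move=> H; rewrite /limn_esup /limf_esup.
apply: le_ereal_inf_tmp => _ [V HV <-].
apply: (@le_trans _ _ (ereal_sup (u @` V))).
  by apply: ereal_inf_lbound; exists V.
apply: ge_ereal_sup => _ [n Vn <-].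
apply: le_trans (H n) _; apply: ereal_sup_ubound; by exists n.
Qed.

Lemma limsup_ev (u : nat -> \bar R) (x : \bar R) :
  (exists N, forall n, (N <= n)%N -> (x <= u n)%E) -> (x <= limn_esup u)%E.
Proof.
move=> [N HN]; rewrite /limn_esup /limf_esup.
apply: le_ereal_inf_tmp => _ [V [M _ HM] <-].
apply: le_ereal_sup_tmp; exists (u (maxn N M)).
  by exists (maxn N M) => //; apply: HM; rewrite /= leq_maxr.
by apply: HN; rewrite leq_maxl.
Qed.

Lemma gk_lower (a : nat -> nat) (d dl : R) : 0 < d -> 0 < dl ->
  (forall m, (m%:R * dl) `^ d <= (a m)%:R) ->
  (d%:E <= limn_esup (fun m => (ln (a m)%:R / ln m%:R)%:E))%E.
Proof.
move=> d0 dl0 Ha; apply/lee_subgt0Pr => e e0.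
apply: limsup_ev.
set L := `|d * ln dl| / e.
exists (Num.Def.archi_bound (expR L)).+2 => m Hm.
rewrite lee_fin.
have m2 : 1 < m%:R :> R by rewrite ltr1n; apply: leq_trans Hm.
have lm : 0 < ln (m%:R : R) := ln_gt0 m2.
have mL : expR L <= m%:R.
  apply/ltW; apply: lt_le_trans (archi_boundP (ltW (expR_gt0 L))) _.
  by rewrite ler_nat; apply: leq_trans Hm; apply: leqW; apply: leqW.
have lnL : L <= ln (m%:R : R).
  by rewrite -[X in X <= _](expRK L) ler_ln ?posrE ?expR_gt0 //; lra.
have eL : `|d * ln dl| <= e * ln (m%:R : R).
  by rewrite [e * _]mulrC -ler_pdivrMr.
have mdl : 0 < m%:R * dl by apply: mulr_gt0 => //; lra.
have ha : d * (ln (m%:R : R) + ln dl) <= ln ((a m)%:R : R).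
  rewrite -lnM ?posrE //; last lra.
  rewrite -ln_powR ler_ln ?posrE ?powR_gt0 //.
  by apply: lt_le_trans (Ha m); apply: powR_gt0.
rewrite ler_pdivlMr //.
have := ler_norm (- (d * ln dl)); rewrite normrN => hn.
nra.
Qed.

End Ana2.
Lemma ln_nat_ge0 (m : nat) : 0 <= ln (m%:R : RR).
Proof.
case: m => [|m]; first by rewrite ln0.
by apply: ln_ge0; rewrite ler1n.
Qed.

Lemma ln_nat_le (m n : nat) : (m <= n)%N -> ln (m%:R : RR) <= ln (n%:R : RR).
Proof.
case: m => [|m] mn; first by rewrite ln0 // ln_nat_ge0.
by rewrite ler_ln ?posrE ?ltr0n // ?ler_nat // (leq_trans _ mn).
Qed.

Lemma gk_ratio_le (a b : nat -> nat) : (forall m, (a m <= b m)%N) ->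
  (limn_esup (fun m : nat => ((ln (a m)%:R / ln m%:R : RR))%:E) <=
   limn_esup (fun m : nat => ((ln (b m)%:R / ln m%:R : RR))%:E))%E.
Proof.
move=> H; apply: limsup_mono => m; rewrite lee_fin.
apply: ler_wpM2r; first by rewrite invr_ge0 ln_nat_ge0.
exact: ln_nat_le.
Qed.

Theorem lemma3p2 (k : fieldType) (chark0 : [pchar k] =i pred0)
  (A B : algType k) (f : {lrmorphism A -> B}) (f_inj : injective f) :
  prime_ring A -> goldie A -> prime_ring B -> goldie B ->
  LDdim A = LDdim B -> LD_stable B -> LD_stable A.
Proof.
move=> [one0 _] _ _ _ LDe stB.
have GKmono : (GKdim A <= GKdim B)%E.
  apply: ge_ereal_sup => _ [s Hs <-].
  apply: le_trans (@gk_ratio_le _ (fun m => fdim (spow (map f s) m)) _) _.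
    by move=> m /=; rewrite -map_spow; apply: fdim_map_le.
  apply: ereal_sup_ubound; exists (map f s) => //.
  rewrite /subframe -(rmorph1 f); exact: span_map.
have LDle : (LDdim A <= GKdim A)%E.
  rewrite /LDdim; case: ifP => _.
    have H1 : subframe [:: (1 : A)] by apply: span_mem; rewrite inE.
    rewrite /GKdim; apply: (@le_trans _ _ (limn_esup (fun m : nat => ((ln (fdim (spow [:: (1 : A)] m))%:R / ln m%:R : RR))%:E))); last first.
      by apply: ereal_sup_ubound; exists [:: 1].
    apply: limsup_ev; exists 0%N => m _; rewrite lee_fin.
    by apply: mulr_ge0; rewrite ?invr_ge0 ln_nat_ge0.
  apply: ge_ereal_sup => _ [d [d0 [s [Hs [c [c0 Hc]]]]] <-].
  pose a := fun m => fdim (spow s m).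
  have apos : forall m, (0 < a m)%N.
    by move=> m; apply: (@fdim_pos _ _ _ 1 one0); apply: one_spow.
  have arec : forall m, (a m)%:R + c * (a m)%:R `^ ((d - 1) / d) <= (a m.+1)%:R :> RR.
    move=> m; apply: le_trans (Hc (spow s m) (apos m)) _.
    rewrite ler_nat; apply: fdim_mono => v; exact: spow_shift.
  have [dl dl0 Hdl] := @growth _ a c d c0 d0 apos arec.
  apply: le_trans (@gk_lower _ a d dl d0 dl0 Hdl) _.
  by apply: ereal_sup_ubound; exists s.
rewrite /LD_stable in stB *.
apply/eqP; rewrite eq_le LDle /= LDe stB; exact: GKmono.
Qed.
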